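(* Let $\mathbf P=(P,\leq,{}',0,1)$ be an orthogonal lub-complete poset. Then the following conditions are equivalent: (i) $\mathbf P$ is an orthomodular poset. (ii) $\mathbf P$ satisfies $x\leq y$ if and only if $x\rightarrow_S y=1$ for all $x,y\in P$. (iii) $\mathbf P$ satisfies $x\leq y$ if and only if $x\rightarrow_D y=1$ for all $x,y\in P$.
   Context: $(P,\leq,{}',0,1)$ is a bounded poset with an antitone involution ${}'$; orthogonal means $x\leq y'$ implies $x\vee y$ exists; lub-complete means for every lower bound $x$ of a finite subset $M$ there is a maximal lower bound of $M$ above $x$; orthomodular means orthogonal and $x\leq y$ implies $x\vee(y\wedge x')=y$. $L(x,y)$ is the set of common lower bounds and $\mathrm{Max}\,A$ the set of maximal elements of $A$; joins with sets are elementwise. Sasaki implication: $x\rightarrow_S y:=x'\vee \mathrm{Max}\,L(x,y)$; Dishkant implication: $x\rightarrow_D y:=y'\rightarrow_S x'=y\vee \mathrm{Max}\,L(x',y')$. ''$=1$'' means equal to $\{1\}$. *)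

(* Defs.v *)
From Stdlib Require Import List.
Import ListNotations.

Record bposet_ai := BPosetAI {
  car :> Type;
  le : car -> car -> Prop;
  cpl : car -> car;
  zero : car;
  one : car;
  le_refl : forall x, le x x;
  le_antisym : forall x y, le x y -> le y x -> x = y;
  le_trans : forall x y z, le x y -> le y z -> le x z;
  zero_le : forall x, le zero x;
  le_one : forall x, le x one;
  cpl_invol : forall x, cpl (cpl x) = x;
  cpl_anti : forall x y, le x y -> le (cpl y) (cpl x)
}.

Arguments le {_} _ _.
Arguments cpl {_} _.
Arguments zero {_}.
Arguments one {_}.

Section Defs.
Context {P : bposet_ai}.

Definition is_join (x y z : P) : Prop :=
  le x z /\ le y z /\ forall w, le x w -> le y w -> le z w.

Definition is_meet (x y z : P) : Prop :=
  le z x /\ le z y /\ forall w, le w x -> le w y -> le w z.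

Definition Lb (x y : P) : P -> Prop := fun z => le z x /\ le z y.

Definition Max (A : P -> Prop) : P -> Prop :=
  fun z => A z /\ forall w, A w -> le z w -> w = z.

(* Sasaki implication  x ->_S y := x' \/ Max L(x,y)  (elementwise joins) *)
Definition sasaki (x y : P) : P -> Prop :=
  fun z => exists m, Max (Lb x y) m /\ is_join (cpl x) m z.

Definition dishkant (x y : P) : P -> Prop := sasaki (cpl y) (cpl x).

Definition eq_one (A : P -> Prop) : Prop := forall z, A z <-> z = one.
End Defs.

Definition orthogonal (P : bposet_ai) : Prop :=
  forall x y : P, le x (cpl y) -> exists z, is_join x y z.

Definition lub_complete (P : bposet_ai) : Prop :=
  forall (M : list P) (x : P), (forall m, In m M -> le x m) ->
    exists z, Max (fun w => forall m, In m M -> le w m) z /\ le x z.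

Definition orthomodular (P : bposet_ai) : Prop :=
  orthogonal P /\
  forall x y : P, le x y -> exists m, is_meet y (cpl x) m /\ is_join x m y.

(* Main.v *)
Require Import Defs.
From Stdlib Require Import List.
Import ListNotations.

Section H.
Context {P : bposet_ai}.

Lemma cc (x : P) : cpl (cpl x) = x.
Proof. apply cpl_invol. Qed.

Lemma anti' (x y : P) : le (cpl x) (cpl y) -> le y x.
Proof. intro H. apply cpl_anti in H. rewrite !cc in H. exact H. Qed.

Lemma le_cpl_r (x y : P) : le x (cpl y) -> le y (cpl x).
Proof. intro H. apply cpl_anti in H. rewrite cc in H. exact H. Qed.

Lemma one_cpl : cpl (one : P) = zero.
Proof.
  apply le_antisym; [|apply zero_le].
  pose proof (cpl_anti _ _ _ (le_one _ (cpl (zero:P)))) as H. rewrite cc in H. exact H.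
Qed.

Lemma join_uniq (x y z w : P) : is_join x y z -> is_join x y w -> z = w.
Proof.
  intros [H1 [H2 H3]] [G1 [G2 G3]]. apply le_antisym; auto.
Qed.

Lemma join_sym (x y z : P) : is_join x y z -> is_join y x z.
Proof. intros [H1 [H2 H3]]. split; [|split]; auto. Qed.

Lemma max_lb_le (x y m : P) : Max (Lb x y) m -> le x y -> m = x.
Proof.
  intros [[H1 H2] H3] Hxy. symmetry. apply H3; [split; [apply le_refl|exact Hxy]|exact H1].
Qed.

Lemma max_self (x y : P) : le x y -> Max (Lb x y) x.
Proof.
  intros Hxy. split; [split; [apply le_refl|exact Hxy]|].
  intros w [Hw1 Hw2] Hxw. apply le_antisym; auto.
Qed.
Lemma max_lb_le2 (x y m : P) : Max (Lb x y) m -> le y x -> m = y.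
Proof.
  intros [[H1 H2] H3] Hxy. symmetry. apply H3; [split; [exact Hxy|apply le_refl]|exact H2].
Qed.

Lemma max_self2 (x y : P) : le y x -> Max (Lb x y) y.
Proof.
  intros Hxy. split; [split; [exact Hxy|apply le_refl]|].
  intros w [Hw1 Hw2] Hxw. apply le_antisym; auto.
Qed.
End H.

Lemma OM_compl (P : bposet_ai) : orthomodular P -> forall x : P, is_join (cpl x) x one.
Proof.
  intros [_ Hom] x. destruct (Hom x one (le_one _ x)) as [m [[M1 [M2 M3]] J]].
  assert (m = cpl x). { apply le_antisym; auto. apply M3; [apply le_one|apply le_refl]. }
  subst m. apply join_sym. exact J.
Qed.

Lemma OM_ii (P : bposet_ai) (Hort : orthogonal P) (Hlub : lub_complete P) :
  orthomodular P <-> (forall x y : P, le x y <-> eq_one (sasaki x y)).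
Proof.
  split.
  - intros Hom x y. pose proof (OM_compl P Hom) as Hc. split.
    + intros Hxy z. split.
      * intros [m [Hm Hj]]. rewrite (max_lb_le _ _ _ Hm Hxy) in Hj.
        exact (join_uniq _ _ _ _ Hj (Hc x)).
      * intros ->. exists x. split; [apply max_self; exact Hxy| apply Hc].
    + intros Heq.
      destruct (Hlub [x; y] zero) as [m [[Hm1 Hm2] _]].
      { intros; apply zero_le. }
      assert (Hmx : le m x) by (apply Hm1; simpl; auto).
      assert (Hmy : le m y) by (apply Hm1; simpl; auto).
      assert (HM : Max (Lb x y) m).
      { split; [split; auto|]. intros w [w1 w2] hw. apply Hm2; auto.
        intros k [<-|[<-|[]]]; auto. }
      destruct (Hort (cpl x) m) as [z Hz].
      { apply cpl_anti. exact Hmx. }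
      assert (z = one) by (apply Heq; exists m; auto). subst z.
      destruct Hom as [_ Hom]. destruct (Hom m x Hmx) as [k [[K1 [K2 K3]] [J1 [J2 J3]]]].
      assert (Hk : k = zero).
      { apply le_antisym; [|apply zero_le].
        destruct Hz as [_ [_ Z3]].
        assert (le one (cpl k)).
        { apply Z3. apply cpl_anti; exact K1. apply le_cpl_r; exact K2. }
        apply cpl_anti in H. rewrite cc, one_cpl in H. exact H. }
      subst k. apply (le_trans _ _ m); auto. apply J3; [apply le_refl|apply zero_le].
  - intros Hii. split; [exact Hort|].
    assert (Hc : forall a : P, is_join (cpl a) a one).
    { intro a. destruct (proj1 (Hii a a) (le_refl _ a) one) as [_ Hs].
      destruct (Hs eq_refl) as [n [Hn Hj]]. rewrite (max_lb_le _ _ _ Hn (le_refl _ a)) in Hj.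
      exact Hj. }
    intros x y Hxy.
    destruct (Hort (cpl y) x) as [s [S1 [S2 S3]]].
    { apply cpl_anti. exact Hxy. }
    set (m := cpl s).
    assert (Hmeet : is_meet y (cpl x) m).
    { unfold m. split; [|split].
      - apply anti'. rewrite cc. exact S1.
      - apply cpl_anti. exact S2.
      - intros w w1 w2. rewrite <- (cc w). apply cpl_anti. apply S3.
        apply cpl_anti; exact w1. apply le_cpl_r; exact w2. }
    exists m. split; [exact Hmeet|].
    destruct (Hort x m) as [j Hj].
    { unfold m. rewrite cc. exact S2. }
    destruct Hmeet as [M1 [M2 M3]].
    destruct Hj as [J1 [J2 J3]].
    assert (Hjy : le j y) by (apply J3; auto).
    assert (Htop : forall u, le (cpl y) u -> le j u -> le one u).
    { intros u u1 u2. destruct (Hc m) as [_ [_ C3]]. apply C3.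
      - unfold m. rewrite cc. apply S3; auto. apply (le_trans _ _ j); auto.
      - apply (le_trans _ _ j); auto. }
    assert (Hyj : le y j).
    { apply (proj2 (Hii y j)). intro z. split.
      - intros [n [Hn Hz]]. rewrite (max_lb_le2 _ _ _ Hn Hjy) in Hz.
        destruct Hz as [Z1 [Z2 Z3]]. apply le_antisym; [apply le_one|auto].
      - intros ->. exists j. split; [apply max_self2; exact Hjy|].
        split; [apply le_one|split; [apply le_one|exact Htop]]. }
    assert (j = y) by (apply le_antisym; auto). subst j.
    split; [|split]; auto.
Qed.

Theorem theorem9 (P : bposet_ai) (Hort : orthogonal P) (Hlub : lub_complete P) :
  (orthomodular P <-> (forall x y : P, le x y <-> eq_one (sasaki x y))) /\
  (orthomodular P <-> (forall x y : P, le x y <-> eq_one (dishkant x y))).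
Proof.
  pose proof (OM_ii P Hort Hlub) as E. split; [exact E|].
  rewrite E. unfold dishkant. split.
  - intros H x y. rewrite <- H. split; [apply cpl_anti|apply anti'].
  - intros H x y. specialize (H (cpl y) (cpl x)). rewrite !cc in H. rewrite <- H.
    split; [apply cpl_anti|apply anti'].
Qed.
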